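(* Let $G$ be a compact Hausdorff topological group and $X$ a $G$-connected Hausdorff $G$-space. If $H=G_z$ is the isotropy group of some point $z\in X$, then $\mathrm{cat}_H(X)\le\mathbf{TC}_G(X)$.
   Context: $G_z=\{g\in G: gz=z\}$. $X$ is $G$-connected if $X^K=\{x: kx=x\ \forall k\in K\}$ is path-connected for every closed subgroup $K$. For a compact group $\Gamma$ acting on $Y$: a $\Gamma$-homotopy is an equivariant homotopy with trivial action on $I$; an invariant set is $\Gamma$-categorical if its inclusion is $\Gamma$-homotopic to a map into a single $\Gamma$-orbit; $\mathrm{cat}_\Gamma(Y)$ is the least number of open $\Gamma$-categorical sets covering $Y$. $\mathbf{TC}_G(X)$ is the least $k$ such that $X\times X$ (diagonal action) is covered by $k$ $G$-invariant open sets $U_i$ each admitting a $G$-map $s\colon U_i\to X^I$ with $\pi s$ $G$-homotopic to the inclusion ($\infty$ if none); $X^I$ is the path space (compact-open topology, action $(g\gamma)(t)=g\gamma(t)$), $\pi(\gamma)=(\gamma(0),\gamma(1))$. *)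

(* Defs.v *)
From HB Require Import structures.
From mathcomp Require Import all_boot all_order all_algebra.
From mathcomp Require Import all_classical all_reals.
From mathcomp Require Import topology ereal normedtype.
Import numFieldNormedType.Exports.
Set Implicit Arguments. Unset Strict Implicit. Unset Printing Implicit Defensive.
Import Order.TTheory GRing.Theory Num.Theory.
Local Open Scope classical_set_scope.
Local Open Scope ring_scope.

Record topGroup (G : topologicalType) := TopGroup {
  gmul : G -> G -> G;
  ginv : G -> G;
  gone : G;
  gmulA : forall a b c, gmul a (gmul b c) = gmul (gmul a b) c;
  gmul1 : forall a, gmul gone a = a;
  gmulV : forall a, gmul (ginv a) a = gone;
  gmul_cont : continuous (fun p : G * G => gmul p.1 p.2);
  ginv_cont : continuous ginv }.

Record gaction (G : topologicalType) (gG : topGroup G) (X : topologicalType) :=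
  GAction {
  act : G -> X -> X;
  act1 : forall x, act (gone gG) x = x;
  actM : forall g h x, act (gmul gG g h) x = act g (act h x);
  act_cont : continuous (fun p : G * X => act p.1 p.2) }.

Notation unit_interval R := (set_type (`[0, 1]%classic : set R)).

Section Defs.
Context {R : realType} {G X : topologicalType} {gG : topGroup G}
  (A : gaction gG X).
Local Notation unit_interval := (unit_interval R).

Lemma in01_0 : (0:R) \in (`[0, 1]%classic : set R).
Proof. by apply/mem_set; rewrite /= in_itv /= lexx ler01. Qed.
Lemma in01_1 : (1:R) \in (`[0, 1]%classic : set R).
Proof. by apply/mem_set; rewrite /= in_itv /= lexx ler01. Qed.

Definition i0 : unit_interval := exist _ 0 in01_0.
Definition i1 : unit_interval := exist _ 1 in01_1.

Definition closed_subgroup (K : set G) : Prop :=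
  [/\ closed K, K (gone gG),
      (forall a b, K a -> K b -> K (gmul gG a b)) &
      (forall a, K a -> K (ginv gG a))].

Definition isotropy (z : X) : set G := [set g | act A g z = z].

Definition fixed_set (K : set G) : set X :=
  [set x | forall k, K k -> act A k x = x].

Definition path_connected_set (S : set X) : Prop :=
  forall x y, S x -> S y ->
    exists gam : unit_interval -> X,
      [/\ continuous gam, gam i0 = x, gam i1 = y & forall t, S (gam t)].

Definition G_connected : Prop :=
  forall K, closed_subgroup K -> path_connected_set (fixed_set K).

Definition invariant (K : set G) (U : set X) : Prop :=
  forall k x, K k -> U x -> U (act A k x).

(** U is K-categorical: the inclusion U -> X is K-homotopic (an equivariant
    homotopy, trivial action on I) to a map into a single K-orbit. *)
Definition categorical (K : set G) (U : set X) : Prop :=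
  exists F : X -> unit_interval -> X,
    [/\ {within U `*` setT, continuous (fun p : X * unit_interval => F p.1 p.2)},
        (forall k x t, K k -> U x -> F (act A k x) t = act A k (F x t)),
        (forall x, U x -> F x i0 = x) &
        exists x0, forall x, U x -> exists2 k, K k & F x i1 = act A k x0].

(** cat_K(X): least number of open K-invariant K-categorical sets covering X
    (+oo if there is none), as an extended real. *)
Definition cat_cover (K : set G) (n : nat) : Prop :=
  exists U : nat -> set X,
    (forall i, (i < n)%N -> [/\ open (U i), invariant K (U i) & categorical K (U i)])
    /\ forall x, exists2 i, (i < n)%N & U i x.

Definition eqcat (K : set G) : \bar R :=
  ereal_inf [set (n%:R)%:E | n in cat_cover K].

Definition dact (g : G) (p : X * X) : X * X := (act A g p.1, act A g p.2).

(** A G-invariant open U in X * X admits an equivariant motion planner: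
    a G-map s : U -> X^I (X^I = continuous paths, compact-open topology,
    action pointwise) such that pi o s is G-homotopic to the inclusion. *)
Definition eq_motion_planner (U : set (X * X)) : Prop :=
  exists s : X * X -> unit_interval -> X,
    [/\ (forall p, U p -> continuous (s p)),
        {within U, continuous (s : X * X -> {compact-open, unit_interval -> X})},
        (forall g p t, U p -> s (dact g p) t = act A g (s p t)) &
        exists F : X * X -> unit_interval -> X * X,
        [/\ {within U `*` setT,
              continuous (fun q : (X * X) * unit_interval => F q.1 q.2)},
            (forall g p t, U p -> F (dact g p) t = dact g (F p t)),
            (forall p, U p -> F p i0 = (s p i0, s p i1)) &
            (forall p, U p -> F p i1 = p)]].

Definition tc_cover (n : nat) : Prop :=
  exists U : nat -> set (X * X),
    (forall i, (i < n)%N ->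
       [/\ open (U i), (forall g p, U i p -> U i (dact g p)) &
           eq_motion_planner (U i)])
    /\ forall p, exists2 i, (i < n)%N & U i p.

(** Equivariant topological complexity TC_G(X) (+oo if no such cover). *)
Definition eqTC : \bar R := ereal_inf [set (n%:R)%:E | n in tc_cover].

End Defs.

(* Main.v *)
Require Import Defs.
From HB Require Import structures.
From mathcomp Require Import all_boot all_order all_algebra.
From mathcomp Require Import all_classical all_reals.
From mathcomp Require Import topology ereal normedtype.
Import numFieldNormedType.Exports.
Import Order.TTheory GRing.Theory Num.Theory.
Local Open Scope classical_set_scope.
Local Open Scope ring_scope.
Section S. Context (R : realType).
Lemma clamp_in (r : R) : (Num.min 1 (Num.max 0 r)) \in (`[0, 1]%classic : set R).
Proof. apply/mem_set; rewrite /= in_itv /=.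
apply/andP; split; first by rewrite le_min ler01 le_max lexx. by rewrite ge_min lexx. Qed.
Definition clamp (r : R) : unit_interval R := exist _ (Num.min 1 (Num.max 0 r)) (clamp_in r).
Lemma clamp_cont : continuous clamp.
Proof.
apply: (@continuous_comp_initial _ _ _ set_val) => x /=.
apply: (@continuous_min R R (fun=> 1) (fun r => Num.max 0 r)); first exact: cvg_cst.
apply: (@continuous_max R R (fun=> 0) id); first exact: cvg_cst.
exact: cvg_id.
Qed.
End S.
Section T. Context (R : realType).
Lemma compact_I : compact [set: unit_interval R].
Proof.
have -> : [set: unit_interval R] = clamp R @` `[0, 1].
  apply/seteqP; split => // t _.
  case: t => r Hr; exists r; first by move/set_mem: Hr.
  apply: val_inj => /=; move/set_mem: (Hr); rewrite /= in_itv /= => /andP[h0 h1].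
  by rewrite max_r // min_r.
apply: continuous_compact; last exact: segment_compact.
exact/continuous_subspaceT/clamp_cont.
Qed.

Lemma joint {P Y : topologicalType} (U : set P) (s : P -> unit_interval R -> Y) :
 (forall p, U p -> continuous (s p)) ->
 {within U, continuous (s : P -> {compact-open, unit_interval R -> Y})} ->
 {within U `*` setT, continuous (fun q : P * unit_interval R => s q.1 q.2)}.
Proof.
move=> cs cU; apply/subspace_continuousP => -[p t] /= [Up _].
move/subspace_continuousP: cU => /(_ p Up) cU.
move=> D /=; rewrite nbhsE => -[O [oO Ofuv]] /filterS; apply.
have [Rr Rv RO] : exists2 Rr, nbhs t Rr & forall z, closure Rr z -> O (s p z).
  have [] := (@uniform_regular (unit_interval R)) t (s p @^-1` O).
    by apply: (cs p Up); exact: open_nbhs_nbhs.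
  by move=> Rr ? ?; exists Rr.
have cK : compact (closure Rr).
  apply: (subclosed_compact _ compact_I) => //; exact: closed_closure.
pose W := [set g : {compact-open, unit_interval R -> Y} | g @` closure Rr `<=` O].
have oW : open W by apply: compact_open_open.
have Ws : W (s p) by move=> _ [z Kz <-]; exact: RO.
have := cU W (open_nbhs_nbhs (conj oW Ws)).
rewrite nbhs_simpl /= => HW.
rewrite /within /=. 
exists ((fun q => U q -> W (s q)), Rr) => //.
case=> a b /= [Ha Hb] [Ua _]; apply: (Ha Ua); exists b => //.
exact: subset_closure.
Qed.
End T.
Lemma within_comp {T1 T2 T3 : topologicalType} (A : set T1) (B : set T2)
  (g : T1 -> T2) (f : T2 -> T3) :
  continuous g -> (forall x, A x -> B (g x)) -> {within B, continuous f} ->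
  {within A, continuous (f \o g)}.
Proof.
move=> cg AB /subspace_continuousP cf; apply/subspace_continuousP => x Ax.
apply: (cvg_comp _ _ _ (cf _ (AB _ Ax))).
move=> W /=; rewrite /within /= => HW.
rewrite nbhs_simpl /=.
have := cg x _ HW; rewrite nbhs_simpl /=.
by apply: filterS => y Hy Ay; apply: Hy; apply: AB.
Qed.

Arguments within_comp {T1 T2 T3 A B g f}.
Lemma nbhs_within_of {T U : topologicalType} {D : set T} {f : T -> U} {x W} :
  {within D, continuous f} -> D x -> nbhs (f x) W ->
  nbhs x (fun y => D y -> W (f y)).
Proof.
move/subspace_continuousP => cf Dx HW; exact: (cf x Dx W HW).
Qed.

Lemma paste {T U : topologicalType} (D A B : set T) (f : T -> U) :
  closed A -> closed B ->
  {within D `&` A, continuous f} -> {within D `&` B, continuous f} ->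
  {within D `&` (A `|` B), continuous f}.
Proof.
move=> clA clB cA cB; apply/subspace_continuousP => x [Dx ABx] W HW.
rewrite /within /= nbhs_simpl.
have nA : ~ A x -> nbhs x (~` A).
  move=> nAx; apply: open_nbhs_nbhs; split => //; exact: closed_openC.
have nB : ~ B x -> nbhs x (~` B).
  move=> nBx; apply: open_nbhs_nbhs; split => //; exact: closed_openC.
case: (pselect (A x)) => Ax; case: (pselect (B x)) => Bx.
- have h1 : nbhs x (fun y => (D `&` A) y -> W (f y)) := nbhs_within_of cA (conj Dx Ax) HW.
  have h2 : nbhs x (fun y => (D `&` B) y -> W (f y)) := nbhs_within_of cB (conj Dx Bx) HW.
  apply: filterS (filterI h1 h2) => y [g1 g2] [Dy [Ay|By]]; [exact: g1|exact: g2].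
- have h1 : nbhs x (fun y => (D `&` A) y -> W (f y)) := nbhs_within_of cA (conj Dx Ax) HW.
  apply: filterS (filterI h1 (nB Bx)) => y [g1 g2] [Dy [Ay|By]]; [exact: g1|by case: g2].
- have h2 : nbhs x (fun y => (D `&` B) y -> W (f y)) := nbhs_within_of cB (conj Dx Bx) HW.
  apply: filterS (filterI h2 (nA Ax)) => y [g1 g2] [Dy [Ay|By]]; [by case: g2|exact: g1].
- by case: ABx.
Qed.
From mathcomp Require Import lra.
Section Main.
Context (R : realType) (X : topologicalType).
Lemma gcont (z : X) (a b : R) :
  continuous (fun q : X * unit_interval R => ((z, q.1), clamp R (a + b * \val q.2))).
Proof.
move=> q.
apply: (@cvg_pair _ _ _ (nbhs q) (nbhs (z, q.1)) (nbhs (clamp R (a + b * \val q.2))) _ _ _ (fun q => (z, q.1)) (fun q => clamp R (a + b * \val q.2))).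
  apply: (@cvg_pair _ _ _ (nbhs q) (nbhs z) (nbhs q.1) _ _ _ (fun=> z) fst); [exact: cvg_cst | exact: cvg_fst].
apply: (@continuous_comp _ _ _ (fun q : X * unit_interval R => a + b * \val q.2) (clamp R) q); last exact: clamp_cont.
apply: cvgD; first exact: cvg_cst.
apply: cvgM; first exact: cvg_cst.
apply: (@continuous_comp _ _ _ snd (fun t : unit_interval R => \val t)); first exact: cvg_snd.
exact: initial_continuous.
Qed.

Lemma clamp0 : clamp R 0 = i0. Proof. by apply: val_inj => /=; rewrite maxxx minEle ler10. Qed.
Lemma clamp1 : clamp R 1 = i1. Proof. by apply: val_inj => /=; rewrite maxEle ler01 minxx. Qed.
End Main.


Section Cat.
Context (R : realType) (G X : topologicalType) (gG : topGroup G) (A : gaction gG X) (z : X)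
 (U : set (X * X)) (s : X * X -> unit_interval R -> X) (F : X * X -> unit_interval R -> X * X).
Hypotheses (hs1 : forall p, U p -> continuous (s p))
 (hs2 : {within U, continuous (s : X * X -> {compact-open, unit_interval R -> X})})
 (hs3 : forall g p t, U p -> s (dact A g p) t = act A g (s p t))
 (hF1 : {within U `*` setT, continuous (fun q : (X * X) * unit_interval R => F q.1 q.2)})
 (hF2 : forall g p t, U p -> F (dact A g p) t = dact A g (F p t))
 (hF3 : forall p, U p -> F p i0 = (s p i0, s p i1))
 (hF4 : forall p, U p -> F p i1 = p).

Definition Phi (x : X) (t : unit_interval R) : X :=
 if 3 * \val t <= 1 then (F (z,x) (clamp R (1 + (-3) * \val t))).2
 else if 3 * \val t <= 2 then s (z,x) (clamp R (2 + (-3) * \val t))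
 else (F (z,x) (clamp R ((-2) + 3 * \val t))).1.

Lemma cat_main : categorical (R := R) A (isotropy A z) [set x | U (z, x)].
Proof.
exists Phi; split.
- set D := [set x | U (z, x)] `*` [set: unit_interval R].
  pose rr := fun q : X * unit_interval R => 3 * \val q.2.
  have crr : continuous rr.
    move=> q; apply: cvgM; first exact: cvg_cst.
    apply: (@continuous_comp _ _ _ snd (fun t : unit_interval R => \val t)); first exact: cvg_snd.
    exact: initial_continuous.
  pose B1 := [set q | rr q <= 1].
  pose B2 := [set q | 1 <= rr q] `&` [set q | rr q <= 2].
  pose B3 := [set q | 2 <= rr q].
  have ccl := proj1 (continuous_closedP rr) crr.
  have cB1 : closed B1 by exact: (ccl _ (@closed_le R (1:R))).
  have cB3 : closed B3 by exact: (ccl _ (@closed_ge R (2:R))).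
  have cB2 : closed B2.
    by apply: closedI; [exact: (ccl _ (@closed_ge R (1:R)))|exact: (ccl _ (@closed_le R (2:R)))].
  have DU : forall q, D q -> (U `*` [set: unit_interval R]) ((z, q.1), clamp R (1 + (-3) * \val q.2)) by move=> q [Uq _].
  have DU2 : forall q, D q -> (U `*` [set: unit_interval R]) ((z, q.1), clamp R (2 + (-3) * \val q.2)) by move=> q [Uq _].
  have DU3 : forall q, D q -> (U `*` [set: unit_interval R]) ((z, q.1), clamp R ((-2) + 3 * \val q.2)) by move=> q [Uq _].
  have c1 := within_comp (@gcont R X z 1 (-3)) DU hF1.
  have c2 := within_comp (@gcont R X z 2 (-3)) DU2 (@joint R _ _ _ _ hs1 hs2).
  have c3 := within_comp (@gcont R X z (-2) 3) DU3 hF1.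
  have c1' : {within D, continuous (fun q => (F (z, q.1) (clamp R (1 + (-3) * \val q.2))).2)}.
    apply: (@within_continuous_comp _ _ _ D _ snd) => // w _; exact: cvg_snd.
  have c3' : {within D, continuous (fun q => (F (z, q.1) (clamp R ((-2) + 3 * \val q.2))).1)}.
    apply: (@within_continuous_comp _ _ _ D _ fst) => // w _; exact: cvg_fst.
  have -> : D = D `&` ((B1 `|` B2) `|` B3).
    apply/seteqP; split => q //; last by case.
    move=> Dq; split => //; rewrite /B1 /B2 /B3 /=.
    case: (lerP (rr q) 1) => h1; first by left; left.
    case: (lerP (rr q) 2) => h2; first by left; right; split => //; exact: ltW.
    by right; exact: ltW.
  apply: (@paste _ _ D (B1 `|` B2) B3) => //; first exact: closedU.
  apply: (@paste _ _ D B1 B2) => //.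
  + apply: (subspace_eq_continuous _ (continuous_subspaceW (@subIsetl _ D B1) c1')).
    move=> q /set_mem [[Uq _] h]; rewrite /Phi /from_subspace /=.
    by rewrite /from_subspace /= ifT.
  + apply: (subspace_eq_continuous _ (continuous_subspaceW (@subIsetl _ D B2) c2)).
    move=> q /set_mem [[Uq _] [h1 h2]]; rewrite /Phi /from_subspace /=.
    rewrite /rr /= in h1 h2; rewrite h2.
    case: ifP => // h3; have h3' : 3 * sval q.2 <= 1 by rewrite h3.
    have -> : 1 + -3 * sval q.2 = 0 by lra.
    have -> : 2 + -3 * sval q.2 = 1 by lra.
    by rewrite clamp0 clamp1 hF3.
  + apply: (subspace_eq_continuous _ (continuous_subspaceW (@subIsetl _ D B3) c3')).
    move=> q /set_mem [[Uq _] h]; rewrite /Phi /from_subspace /=.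
    rewrite /B3 /rr /= in h.
    case: ifP => h3.
      have h3' : 3 * sval q.2 <= 1 by rewrite h3.
      exfalso; lra.
    case: ifP => // h4; have h4' : 3 * sval q.2 <= 2 by rewrite h4.
    have -> : 2 + -3 * sval q.2 = 0 by lra.
    have -> : -2 + 3 * sval q.2 = 0 by lra.
    by rewrite clamp0 hF3.
- move=> k x t Hk Ux; rewrite /isotropy /= in Hk.
  have E : (z, act A k x) = dact A k (z, x) by rewrite /dact /= Hk.
  rewrite /Phi E; case: ifP => _; first by rewrite hF2.
  by case: ifP => _; [rewrite hs3 | rewrite hF2].
- move=> x Ux; rewrite /Phi /= mulr0 ler01 mulr0 addr0 clamp1 hF4 //.
- exists z => x Ux; exists (gone gG); first by rewrite /isotropy /= act1.
  rewrite /Phi /from_subspace /=.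
  have -> : (3 * 1 <= 1 :> R) = false by apply/negbTE; rewrite -ltNge; lra.
  have -> : (3 * 1 <= 2 :> R) = false by apply/negbTE; rewrite -ltNge; lra.
  have -> : (-2 + 3 * 1 : R) = 1 by lra.
  by rewrite clamp1 hF4 //= act1.
Qed.
End Cat.
Local Open Scope ereal_scope.
Theorem proposition5p7 (R : realType) (G X : topologicalType) (gG : topGroup G)
  (A : gaction gG X) :
  compact [set: G] -> hausdorff_space G -> hausdorff_space X ->
  G_connected (R := R) A ->
  forall z : X, eqcat (R := R) A (isotropy A z) <= eqTC (R := R) A.
Proof.
move=> _ _ _ _ z; apply: ereal_inf_le_tmp => _ [n [U [HU Hcov]] <-].
exists n => //.
exists (fun i => [set x | U i (z, x)]); split; last first.
  by move=> x; have [i ni Ui] := Hcov (z, x); exists i.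
move=> i ni; have [oU iU [s [hs1 hs2 hs3 [F [hF1 hF2 hF3 hF4]]]]] := HU i ni.
split.
- have cz : continuous (fun x : X => (z, x)).
    move=> x; apply: (@cvg_pair _ _ _ (nbhs x) (nbhs z) (nbhs x) _ _ _ (fun=> z) id);
      [exact: cvg_cst | exact: cvg_id].
  exact: (proj1 (continuousP _) cz _ oU).
- move=> k x Hk Ux; rewrite /isotropy /= in Hk.
  have := iU k (z, x) Ux; by rewrite /dact /= Hk.
- exact: (@cat_main R G X gG A z (U i) s F).
Qed.
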